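(* Let $N\in\mathbb{N}$ with $N\ge3$, $0\le r\le N+1$ and $0\le\ell\le 2N+2$ integers. Then \[ \mathcal{M}_{2r,2\ell}\le\begin{cases}\frac{0.2^\ell}{1.3^{2r}}&\text{if }\ell\ge1,\\[2pt] \frac{0.7}{1.3^{2r}}&\text{if }\ell=0.\end{cases} \]
   Context: $n_N:=\left(\frac{3(3N+4)\log(6N+8)}{1.3^2}\right)^4$ (natural log), and for $r,\ell\in\mathbb{N}_0$ with $\ell$ even, $\mathcal{M}_{r,\ell}:=\sup\left\{\frac{1.4^\ell}{1.3^r}\Gamma\left(\frac{\ell+1}{2}\right)n^{\frac\ell8-\frac r4+\frac{N+2}{2}}e^{-1.3^2n^{1/4}}:\ n\ge n_N\right\}$. *)

(* Defs.v *)
From HB Require Import structures.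
From mathcomp Require Import all_boot all_order all_algebra.
From mathcomp Require Import all_classical all_reals all_analysis.
Set Implicit Arguments. Unset Strict Implicit. Unset Printing Implicit Defensive.
Import Order.TTheory GRing.Theory Num.Theory.
Local Open Scope classical_set_scope.
Local Open Scope ring_scope.

Definition Gamma {R : realType} (x : R) : R :=
  fine (\int[@lebesgue_measure R]_(t in `]0%R, +oo[) ((t `^ (x - 1)) * expR (- t))%:E)%E.

Definition nN {R : realType} (N : nat) : R :=
  ((3 * (3 * N%:R + 4) * ln (6 * N%:R + 8)) / (13 / 10) ^+ 2) ^+ 4.

Definition Mterm {R : realType} (N r l : nat) (n : R) : R :=
  (7 / 5) ^+ l / (13 / 10) ^+ r * Gamma ((l%:R + 1) / 2)
  * n `^ (l%:R / 8 - r%:R / 4 + (N%:R + 2) / 2)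
  * expR (- ((13 / 10) ^+ 2 * n `^ (1 / 4))).

Definition M {R : realType} (N r l : nat) : \bar R :=
  ereal_sup [set (Mterm N r l n)%:E | n in [set n : R | nN N <= n]].

(* Main.v *)
Require Import Defs.
From HB Require Import structures.
From mathcomp Require Import all_boot all_order all_algebra.
From mathcomp Require Import all_classical all_reals all_analysis.
From mathcomp Require Import measurable_realfun exponential_distribution.
From mathcomp Require Import ring lra.
Import Order.TTheory GRing.Theory Num.Theory.
Local Open Scope ring_scope.
Local Open Scope classical_set_scope.

Section dyadic.
Context {R : realType}.
Local Notation mu := (@lebesgue_measure R).

Definition qq (k : nat) : R := (4^-1) ^+ k.

Lemma qq_gt0 k : 0 < qq k.
Proof. by rewrite /qq exprn_gt0. Qed.

Lemma qq_le1 k : qq k <= 1.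
Proof. by apply: exprn_ile1; lra. Qed.

Lemma qq_S k : qq k.+1 = qq k / 4.
Proof. by rewrite /qq exprSr. Qed.


Lemma qq_anti i j : (i <= j)%N -> qq j <= qq i.
Proof. by move=> ij; apply: ler_wiXn2l => //; lra. Qed.

Definition FF (k : nat) : set R := `](qq k.+1), (qq k)]%classic.

Lemma qq_small k : qq k <= (k.+1%:R)^-1.
Proof.
rewrite /qq exprVn lef_pV2 ?posrE ?exprn_gt0 ?ltr0n//.
have := ltn_expl k (isT : (1 < 4)%N).
by rewrite -(ler_nat R) natrX.
Qed.

Lemma bigcupFF : \bigcup_k FF k = `]0, 1]%classic.
Proof.
apply/seteqP; split.
- move=> t [k _]; rewrite /FF /= !in_itv/= => /andP[a b].
  by rewrite (lt_trans (qq_gt0 _) a)/= (le_trans b (qq_le1 _)).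
- move=> t; rewrite /= in_itv/= => /andP[t0 t1].
  have exP : exists k, qq k < t.
    exists (Num.truncn (t^-1)).
    apply: (le_lt_trans (qq_small _)).
    rewrite -[ltRHS]invrK ltf_pV2 ?posrE ?invr_gt0 ?ltr0n//.
    exact: truncnS_gt.
  case: (ex_minnP exP) => k0 Hk0 Hmin.
  case: k0 Hk0 Hmin => [|k] Hk Hmin.
    by rewrite /qq expr0 in Hk; lra.
  exists k => //; rewrite /FF /= in_itv/= Hk/=.
  rewrite leNgt; apply/negP => /Hmin; by rewrite ltnn.
Qed.

Lemma trivFF : trivIset setT FF.
Proof.
apply/trivIsetP => i j _ _ ij.
wlog lt_ij : i j ij / (i < j)%N.
  move=> H; have [lt|lt|eq] := ltngtP i j.
  - exact: H.
  - by rewrite setIC; apply: H => //; rewrite eq_sym.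
  - by rewrite eq eqxx in ij.
apply/seteqP; split => // t [] ; rewrite /FF/= !in_itv/= => /andP[a1 b1] /andP[a2 b2].
have := qq_anti _ _ lt_ij; lra.
Qed.

Lemma sqrt_qq k : Num.sqrt (qq k) = (2^-1) ^+ k.
Proof.
have -> : qq k = ((2^-1) ^+ k) ^+ 2.
  rewrite /qq -exprM mulnC exprM; congr (_ ^+ _); lra.
by rewrite sqrtr_sqr ger0_norm// exprn_ge0.
Qed.

Lemma FF_bound k t : FF k t -> t `^ (- (2^-1)) <= 2 ^+ k.+1.
Proof.
rewrite /FF /= in_itv/= => /andP[a _].
have t0 : 0 < t by apply: lt_trans a; apply: qq_gt0.
rewrite powRN powR12_sqrt; last exact: ltW.
have s0 : 0 < Num.sqrt t by rewrite sqrtr_gt0.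
have : (2^-1) ^+ k.+1 <= Num.sqrt t by rewrite -sqrt_qq ler_sqrt ?ltW.
move=> h; rewrite -(invrK (2 ^+ k.+1)) lef_pV2 ?posrE ?invr_gt0 ?exprn_gt0//.
by rewrite -exprVn.
Qed.

Lemma mu_FF k : mu (FF k) = (qq k - qq k.+1)%:E.
Proof.
rewrite /FF lebesgue_measure_itv/= lte_fin.
case: ifPn => [_|]; first by rewrite EFinD.
have := qq_gt0 k; rewrite qq_S => ? /negP H; exfalso; apply: H; lra.
Qed.

Lemma int_FF k :
  (\int[mu]_(t in FF k) (t `^ (- (2^-1)))%:E <= (4 / (2 ^ (k + 1))%:R)%:E)%E.
Proof.
apply: (@le_trans _ _ (\int[mu]_(t in FF k) (cst (2 ^+ k.+1)%:E) t)%E).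
  apply: ge0_le_integral => //.
  - exact: measurable_itv.
  - by move=> x _; rewrite lee_fin powR_ge0.
  - apply/measurable_EFinP; apply: measurable_funTS.
    exact: measurable_powR.
  - by move=> x /FF_bound; rewrite lee_fin.
rewrite integral_cst//; last exact: measurable_itv.
rewrite (_ : _ (FF k) = (qq k - qq k.+1)%:E); last exact: mu_FF k.
rewrite -EFinM lee_fin qq_S natrX addn1.
have q0 := qq_gt0 k.
suff : 2 ^+ k.+1 * qq k = 4 / 2 ^+ k.+1.
  move=> h; rewrite mulrBr mulrA h.
  have : 0 < (2 ^+ k.+1)^-1 :> R by rewrite invr_gt0// exprn_gt0.
  lra.
rewrite /qq exprVn.
have -> : (4 : R) ^+ k = 2 ^+ k * 2 ^+ k by rewrite -exprMn; congr (_ ^+ _); lra.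
rewrite exprS.
have : (2 : R) ^+ k != 0 by rewrite expf_neq0.
set y := (2 : R) ^+ k => y0; field; exact: y0.
Qed.

Lemma int_sqrt01 :
  (\int[mu]_(t in `]0%R, 1%R]%classic) (t `^ (- (2^-1)))%:E <= 4%:E)%E.
Proof.
rewrite -bigcupFF ge0_integral_bigcup//.
- apply: (@le_trans _ _ (\sum_(0 <= k <oo) ((4 / (2 ^ (k + 1))%:R)%:E))%E).
    apply: lee_nneseries.
      by move=> n _ _; apply: integral_ge0 => x _; rewrite lee_fin powR_ge0.
    by move=> n _; exact: int_FF.
  have := @cvg_geometric_eseries_half R 4 0.
  move/cvg_lim; rewrite expr0 divr1 => <- //.
- by move=> k; exact: measurable_itv.
- apply/measurable_EFinP; apply: measurable_funTS; exact: measurable_powR.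
- by move=> x _; rewrite lee_fin powR_ge0.
- exact: trivFF.
Qed.

End dyadic.
Section pw.
Context {R : realType}.

Lemma pw_exp (l : nat) (y : R) : 0 <= y -> y ^+ l <= l`!%:R * expR y.
Proof.
move=> y0; case: l => [|n].
  by rewrite expr0 fact0 mul1r; have := expR_ge1Dx y; lra.
have h := expR_ge1Dxn n y0.
have f0 : 0 < (n.+1)`!%:R :> R by rewrite ltr0n fact_gt0.
have : y ^+ n.+1 / (n.+1)`!%:R <= expR y by lra.
by rewrite mulrC ler_pdivrMl.
Qed.

Lemma pw1 (l : nat) (t : R) : 0 < t -> t <= 1 ->
  t `^ (l%:R - 2^-1) * expR (- t) <= t `^ (- 2^-1).
Proof.
move=> t0 t1.
apply: le_trans (ler_piMr _ _) _.
- exact: powR_ge0.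
- by rewrite expR_le1; lra.
apply: ger_powR; first by rewrite t0 t1.
have : (0 : R) <= l%:R by rewrite ler0n.
lra.
Qed.

Lemma pw2 (l : nat) (t : R) : 1 < t ->
  t `^ (l%:R - 2^-1) * expR (- t) <= 2 ^+ l.+1 * l`!%:R * exponential_pdf 2^-1 t.
Proof.
move=> t1.
have t0 : 0 <= t by lra.
rewrite exponential_pdfE//.
set E := expR (- 2^-1 * t).
have E0 : 0 < E by rewrite expR_gt0.
have EE : expR (- t) = E * E by rewrite -expRD; congr expR; lra.
have GE : expR (t / 2) * E = 1 by rewrite -expRD -[RHS]expR0; congr expR; lra.
have G0 : 0 < expR (t / 2) by rewrite expR_gt0.
have Pt : t `^ (l%:R - 2^-1) <= t ^+ l.
  rewrite -powR_mulrn//; apply: ler_powR; lra.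
have Q : (t / 2) ^+ l <= l`!%:R * expR (t / 2) by apply: pw_exp; lra.
have PQ : t ^+ l = 2 ^+ l * (t / 2) ^+ l by rewrite -exprMn; congr (_ ^+ _); field.
set F := l`!%:R in Q *.
set q := (t / 2) ^+ l in Q PQ.
set G := expR (t / 2) in GE G0 Q.
have F0 : 0 <= F by rewrite /F ler0n.
have p0 : 0 <= t `^ (l%:R - 2^-1) by apply: powR_ge0.
have tw0 : 0 < (2 : R) ^+ l by rewrite exprn_gt0.
rewrite EE exprS.
apply: (@le_trans _ _ (t ^+ l * (E * E))).
  by apply: ler_wpM2r => //; rewrite mulr_ge0// ltW.
rewrite PQ.
have : q * E <= F * G * E by apply: ler_wpM2r => //; exact: ltW.
rewrite -mulrA GE mulr1 => qE.
have : 2 ^+ l * (q * E) * E <= 2 ^+ l * F * E.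
  by apply: ler_wpM2r; [exact: ltW|apply: ler_wpM2l => //; exact: ltW].
move=> h; apply: le_trans (le_trans _ h) _.
  by rewrite !mulrA.
by rewrite le_eqVlt; apply/orP; left; apply/eqP; field.
Qed.

End pw.

Section gamma.
Context {R : realType}.
Local Notation mu := (@lebesgue_measure R).

Lemma mint (p : R) : measurable_fun setT (fun t : R => t `^ p * expR (- t)).
Proof.
apply: measurable_funM; first exact: measurable_powR.
apply: measurableT_comp; first exact: measurable_expR.
exact: oppr_measurable.
Qed.

Lemma fine_le (I : \bar R) (b : R) : (0 <= I)%E -> (I <= b%:E)%E -> fine I <= b.
Proof. by case: I => [r| |] //=; rewrite lee_fin. Qed.

Lemma Gamma_le (l : nat) :
  Gamma (((2 * l)%N%:R + 1) / 2 : R) <= 4 + 2 ^+ l.+1 * l`!%:R.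
Proof.
have hx : ((2 * l)%N%:R + 1) / 2 - 1 = l%:R - 2^-1 :> R by rewrite natrM; field.
rewrite /Gamma hx.
set p := l%:R - 2^-1.
set c := 2 ^+ l.+1 * l`!%:R.
have c0 : 0 <= c by rewrite /c mulr_ge0// ?exprn_ge0// ler0n.
apply: fine_le.
  by apply: integral_ge0 => t _; rewrite lee_fin mulr_ge0// ?powR_ge0// expR_ge0.
rewrite (_ : `]0%R, +oo[%classic = `]0%R, 1%R]%classic `|` `]1%R, +oo[%classic); last first.
  by apply: itv_bndbnd_setU; rewrite bnd_simp.
rewrite ge0_integral_setU//=; first last.

- apply/disj_setPS => t []; rewrite /= !in_itv/= => /andP[_ a] /andP[b _]; lra.
- by move=> t _; rewrite lee_fin mulr_ge0// ?powR_ge0// expR_ge0.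
- by apply/measurable_EFinP; apply: measurable_funTS; exact: mint.
rewrite EFinD; apply: leeD.
- apply: le_trans (int_sqrt01 (R:=R)).
  apply: ge0_le_integral => //.
  + by move=> t _; rewrite lee_fin mulr_ge0// ?powR_ge0// expR_ge0.
  + by apply/measurable_EFinP; apply: measurable_funTS; exact: mint.
  + by apply/measurable_EFinP; apply: measurable_funTS; exact: measurable_powR.
  + by move=> t; rewrite /= in_itv/= => /andP[t0 t1]; rewrite lee_fin pw1.
- apply: (@le_trans _ _ (\int[mu]_(t in `]1%R, +oo[%classic) (c * exponential_pdf 2^-1 t)%:E)%E).
    apply: ge0_le_integral => //.
    + by move=> t _; rewrite lee_fin mulr_ge0// ?powR_ge0// expR_ge0.
    + by apply/measurable_EFinP; apply: measurable_funTS; exact: mint.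
    + apply/measurable_EFinP; apply: measurable_funTS; apply: measurable_funM => //.
      exact: measurable_exponential_pdf.
    + by move=> t; rewrite /= in_itv/= andbT => t1; rewrite lee_fin pw2.
  apply: (@le_trans _ _ (\int[mu]_t (c * exponential_pdf 2^-1 t)%:E)%E).
    apply: ge0_subset_integral => //.
    + apply/measurable_EFinP; apply: measurable_funM => //.
      exact: measurable_exponential_pdf.
    + by move=> t _; rewrite lee_fin mulr_ge0// exponential_pdf_ge0.
  under eq_integral do rewrite EFinM.
  rewrite ge0_integralZl_EFin//.
  + by rewrite integral_exponential_pdf// mule1.
  + by move=> t _; rewrite lee_fin exponential_pdf_ge0.
  + by apply/measurable_EFinP; exact: measurable_exponential_pdf.
Qed.

End gamma.
Section num.
Context {R : realType}.

Lemma fact_le_pow (l k : nat) : (l <= k)%N -> (l`! <= k ^ l)%N.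
Proof.
elim: l => [|l IH] lk //=.
rewrite factS expnS leq_mul//; apply: IH; exact: ltnW.
Qed.

Lemma expR_lb (x : R) (n : nat) : 0 <= x -> (1 + x / n.+1%:R) ^+ n.+1 <= expR x.
Proof.
move=> x0.
have -> : x = n.+1%:R * (x / n.+1%:R) by field.
rewrite expRM_natl (_ : n.+1%:R * (x / n.+1%:R) / n.+1%:R = x / n.+1%:R); last by field.
apply: lerXn2r; rewrite ?nnegrE ?expR_ge0//.
  by rewrite addr_ge0// divr_ge0.
exact: expR_ge1Dx.
Qed.

Lemma ln2_le : ln (2 : R) <= 3 / 4.
Proof.
rewrite -[X in _ <= X]expRK ler_ln ?posrE ?expR_gt0//.
apply: le_trans _ (expR_lb _ 4 _); last lra.
rewrite !exprS expr0; lra.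
Qed.

Lemma ln9815_le : ln (98 / 15 : R) <= 2.
Proof.
rewrite -[X in _ <= X]expRK ler_ln ?posrE ?expR_gt0//.
apply: le_trans _ (expR_lb _ 15 _); last lra.
rewrite !exprS expr0; lra.
Qed.

Lemma expR14_le : expR (1 / 4 : R) <= 4 / 3.
Proof.
have h : 3 / 4 <= expR (- (1 / 4) : R) by have := expR_ge1Dx (- (1/4) : R); lra.
have -> : expR (1 / 4 : R) = (expR (- (1 / 4)))^-1 by rewrite expRN invrK.
have -> : (4 / 3 : R) = (3 / 4)^-1 by field.
by rewrite lef_pV2 ?posrE ?expR_gt0//; lra.
Qed.

Lemma L_ge (X : R) : 26 <= X -> 11 / 4 <= ln X.
Proof.
move=> X26.
rewrite -[X in X <= _]expRK ler_ln ?posrE ?expR_gt0//; last lra.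
have -> : (11 / 4 : R) = 11%:R * (1 / 4) by field.
rewrite expRM_natl.
apply: le_trans X26.
apply: le_trans (_ : (4 / 3) ^+ 11 <= _).
  apply: lerXn2r; rewrite ?nnegrE ?expR_ge0//; try lra.
  exact: expR14_le.
rewrite !exprS expr0; lra.
Qed.

Lemma ln_half (y : R) : 0 < y -> ln y <= y / 2 - 1 + ln 2.
Proof.
move=> y0.
have -> : y = (y / 2) * 2 by field.
rewrite lnM ?posrE//; last by rewrite divr_gt0.
have := @le_ln1Dx R (y / 2 - 1); rewrite (_ : 1 + (y / 2 - 1) = y / 2); last by ring.
move=> h; have := h ltac:(lra).
rewrite (_ : y / 2 * 2 / 2 = y / 2); last by field.
lra.
Qed.
End num.
Lemma final_ineq (R : realType) (N l a L : R) : 3 <= N -> 0 <= l -> l <= 2 * N + 2 ->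
  0 <= a -> a <= l + 2 * N + 4 -> 11 / 4 <= L ->
  3 / 2 + l * (2 + L) + a * (244 / 169 * L - 1 / 4) <= (9 * N + 12) * L.
Proof.
move=> N3 l0 lN a0 al L11.
set K := 244 / 169 * L - 1 / 4.
have K0 : 0 <= K by rewrite /K; lra.
have h1 : a * K <= (l + 2 * N + 4) * K by apply: ler_wpM2r.
have h2 : l * (2 + L + K) <= (2 * N + 2) * (2 + L + K) by apply: ler_wpM2r => //; lra.
have h3 : (2205 / 1000 * N + 2407 / 1000) * 11 / 4 <= (2205 / 1000 * N + 2407 / 1000) * L / 1.
  rewrite divr1 -mulrA; apply: ler_wpM2l; lra.
rewrite /K in h1 h2 h3 *; nra.
Qed.
Lemma final_ineq0 (R : realType) (N a L : R) : 3 <= N -> 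
  0 <= a -> a <= 2 * N + 4 -> 11 / 4 <= L ->
  L + a * (244 / 169 * L - 1 / 4) <= (9 * N + 12) * L.
Proof.
move=> N3 a0 al L11.
set K := 244 / 169 * L - 1 / 4.
have K0 : 0 <= K by rewrite /K; lra.
have h1 : a * K <= (2 * N + 4) * K by apply: ler_wpM2r.
rewrite /K in h1 *; nra.
Qed.

Lemma powR_expR (R : realType) (n e : R) : 0 < n -> n `^ e = expR (e * ln n).
Proof. by move=> n0; rewrite /powR gt_eqF. Qed.

Lemma key_decr (R : realType) (a K m0 u : R) : 0 < m0 -> 0 <= a -> a <= K * m0 -> 0 <= K ->
  ln m0 <= u -> a * u - K * expR u <= a * ln m0 - K * m0.
Proof.
move=> m00 a0 aK K0 hu.
have e1 : m0 * (1 + (u - ln m0)) <= expR u.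
  have -> : expR u = m0 * expR (u - ln m0).
    by rewrite expRB lnK ?posrE// mulrC divfK// gt_eqF.
  by apply: ler_wpM2l; [exact: ltW| exact: expR_ge1Dx].
have h1 : a * (u - ln m0) <= K * m0 * (u - ln m0) by apply: ler_wpM2r => //; lra.
have h2 : K * (m0 * (1 + (u - ln m0))) <= K * expR u by apply: ler_wpM2l.
nra.
Qed.

Theorem lemma3p9 (R : realType) (N r l : nat) :
  (3 <= N)%N -> (r <= N + 1)%N -> (l <= 2 * N + 2)%N ->
  (@M R N (2 * r) (2 * l) <=
    (if (1 <= l)%N then (1 / 5) ^+ l / (13 / 10) ^+ (2 * r)
     else (7 / 10) / (13 / 10) ^+ (2 * r))%:E)%E.
Proof.
move=> N3 rN lN.
have N3R : (3 : R) <= N%:R by rewrite (ler_nat R 3).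
have rNR : (r%:R : R) <= N%:R + 1 by move: rN; rewrite -(ler_nat R) natrD.
have lNR : (l%:R : R) <= 2 * N%:R + 2 by move: lN; rewrite -(ler_nat R) natrD natrM.
have l0R : (0 : R) <= l%:R by rewrite ler0n.
have r0R : (0 : R) <= r%:R by rewrite ler0n.
set X : R := 6 * N%:R + 8.
have X26 : 26 <= X by rewrite /X; lra.
set L := ln X.
have L11 : 11 / 4 <= L := L_ge _ X26.
set m0 : R := 3 * (3 * N%:R + 4) * L / (13 / 10) ^+ 2.
have m0E : m0 = (150 / 169 * L) * X by rewrite /m0 /X; field.
have m0pos : 0 < m0 by rewrite m0E; apply: mulr_gt0; lra.
have lnm0 : ln m0 <= (75 / 169) * L - 1 / 4 + L.
  have p1 : 0 < 150 / 169 * L by lra.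
  have p2 : 0 < X by lra.
  rewrite m0E lnM ?posrE//.
  have := ln_half _ p1; have := @ln2_le R; rewrite -/L; lra.
have K169 : (13 / 10) ^+ 2 * m0 = (9 * N%:R + 12) * L by rewrite /m0; field.
rewrite /M; apply: ge_ereal_sup => _ [n /= hn <-]; rewrite lee_fin.
have hn' : m0 ^+ 4 <= n by exact: hn.
have n0 : 0 < n by apply: lt_le_trans hn'; rewrite exprn_gt0.
set u := ln n / 4.
have hu : ln m0 <= u.
  have := hn'; rewrite -ler_ln ?posrE ?exprn_gt0// lnXn//; rewrite /u; lra.
set a : R := l%:R - 2 * r%:R + 2 * N%:R + 4.
have a0 : 0 <= a by rewrite /a; lra.
have al : a <= l%:R + 2 * N%:R + 4 by rewrite /a; lra.
have aK : a <= (13 / 10) ^+ 2 * m0.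
  rewrite K169; have : (9 * N%:R + 12) * 1 <= (9 * N%:R + 12) * L by apply: ler_wpM2l; lra.
  rewrite /a; lra.
rewrite /Mterm !powR_expR //.
rewrite (_ : ((2 * l)%N%:R / 8 - (2 * r)%N%:R / 4 + (N%:R + 2) / 2) * ln n = a * u); last first.
  by rewrite /u /a !natrM; field.
rewrite (_ : 1 / 4 * ln n = u); last by rewrite /u; field.
have K0 : (0 : R) <= (13 / 10) ^+ 2 by rewrite exprn_ge0.
have kd := @key_decr R _ _ _ _ m0pos a0 aK K0 hu.
rewrite K169 in kd.
set E0 := a * ln m0 - (9 * N%:R + 12) * L in kd.
have E0le : E0 <= a * (244 / 169 * L - 1 / 4) - (9 * N%:R + 12) * L.
  rewrite /E0; have : a * ln m0 <= a * (75 / 169 * L - 1 / 4 + L) by apply: ler_wpM2l.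
  lra.
set G := Gamma _.
have G0 : 0 <= G.
  rewrite /G /Gamma; apply: fine_ge0; apply: integral_ge0 => t _.
  by rewrite lee_fin mulr_ge0 ?powR_ge0 ?expR_ge0.
have Gle : G <= 4 + 2 ^+ l.+1 * l`!%:R by exact: Gamma_le.
set D := (13 / 10) ^+ (2 * r) : R.
have D0 : 0 < D by rewrite exprn_gt0.
have Z : expR (a * u) * expR (- ((13 / 10) ^+ 2 * expR u)) <= expR E0.
  by rewrite -expRD ler_expR.
apply: (@le_trans _ _ ((7 / 5) ^+ (2 * l) * (G * expR E0) / D)).
  have -> : (7 / 5) ^+ (2 * l) * (G * expR E0) / D = (7 / 5) ^+ (2 * l) / D * G * expR E0.
    by rewrite mulrAC !mulrA.
  rewrite -mulrA; apply: ler_wpM2l => //.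
  have h1 : (0 : R) <= (7 / 5) ^+ (2 * l) by apply: exprn_ge0.
  have h2 : 0 <= D^-1 by apply: ltW; rewrite invr_gt0.
  by apply: mulr_ge0 => //; apply: mulr_ge0.
have Dinv : 0 < D^-1 by rewrite invr_gt0.
case: (posnP l) => [l0|lpos].
  move: Gle E0le lNR l0R al; rewrite l0 /= => Gle E0le lNR l0R al.
  rewrite muln0 expr0 mul1r ler_pM2r//.
  have hE : E0 <= - L.
    have := @final_ineq0 R N%:R a L N3R a0 ltac:(lra) L11; lra.
  have hY : expR E0 <= X^-1.
    have -> : X^-1 = expR (- L) by rewrite expRN lnK// posrE; lra.
    by rewrite ler_expR.
  have hX : X^-1 <= 1 / 26 by rewrite div1r lef_pV2 ?posrE//; lra.
  have Y0 : 0 <= expR E0 by apply: expR_ge0.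
  rewrite fact0 expr1 in Gle.
  have : G * expR E0 <= 6 * expR E0 by apply: ler_wpM2r => //; lra.
  nra.
rewrite ler_pM2r//.
have hE : 3 / 2 + l%:R * (2 + L) + E0 <= 0.
  have := @final_ineq R N%:R l%:R a L N3R l0R lNR a0 al L11; lra.
have Y0 : 0 < expR E0 by apply: expR_gt0.
have f1 : (4 : R) <= 2 ^+ l.+1 * l`!%:R.
  have : (4 : R) <= 2 ^+ l.+1.
    have -> : (4 : R) = 2 ^+ 2 by rewrite expr2; lra.
    by rewrite ler_eXn2l ?ltnS//; lra.
  have : (1 : R) <= l`!%:R by rewrite ler1n fact_gt0.
  have : (0 : R) <= 2 ^+ l.+1 by apply: exprn_ge0.
  nra.
have f2 : (l`!%:R : R) <= (2 * N%:R + 2) ^+ l.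
  have := fact_le_pow _ _ lN; rewrite -(ler_nat R) natrX natrD natrM; done.
have Gle2 : G <= 2 ^+ l.+2 * (2 * N%:R + 2) ^+ l.
  apply: (le_trans Gle); rewrite [2 ^+ l.+2]exprS.
  have : 2 ^+ l.+1 * l`!%:R <= 2 ^+ l.+1 * (2 * N%:R + 2) ^+ l :> R.
    by apply: ler_wpM2l => //; apply: exprn_ge0.
  rewrite -mulrA; lra.
set W : R := 98 / 25 * (2 * N%:R + 2).
set P : R := 98 / 15 * X.
have eqW : (7 / 5) ^+ (2 * l) * (2 ^+ l.+2 * (2 * N%:R + 2) ^+ l) = 4 * W ^+ l.
  set q : R := 7 / 5.
  have e : (98 / 25 : R) = q ^+ 2 * 2 by rewrite /q expr2; field.
  rewrite /W e exprM !exprMn [2 ^+ l.+2]exprS [2 ^+ l.+1]exprS; ring.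
have P0 : 0 < P by rewrite /P; lra.
have PW : W ^+ l <= (P / 5) ^+ l.
  apply: lerXn2r; rewrite ?nnegrE /W /P /X; lra.
have lnP : ln P <= 2 + L.
  rewrite /P lnM; last 2 first.
  - by have h : (0 : R) < 98 / 15 by lra.
  - by have h : (0 : R) < X by lra.
  have := @ln9815_le R; rewrite -/L; lra.
have e4 : (4 : R) = expR (ln 2 + ln 2).
  have h2 : (0 : R) < 2 by lra.
  have h4 : (0 : R) < 2 * 2 by lra.
  rewrite -lnM // lnK //; lra.
have ePl : P ^+ l = expR (l%:R * ln P) by rewrite expRM_natl lnK.
have fin : 4 * P ^+ l * expR E0 <= 1.
  rewrite e4 ePl -!expRD -[X in _ <= X]expR0 ler_expR.
  have : l%:R * ln P <= l%:R * (2 + L) by apply: ler_wpM2l.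
  have := @ln2_le R; lra.
apply: (@le_trans _ _ ((7 / 5) ^+ (2 * l) * (2 ^+ l.+2 * (2 * N%:R + 2) ^+ l * expR E0))).
  apply: ler_wpM2l; first exact: exprn_ge0.
  by apply: ler_wpM2r => //; exact: ltW.
rewrite mulrA eqW.
apply: (@le_trans _ _ (4 * (P / 5) ^+ l * expR E0)).
  apply: ler_wpM2r; first exact: ltW.
  by apply: ler_wpM2l.
rewrite exprMn.
have : 0 <= (5^-1 : R) ^+ l by apply: exprn_ge0.
have -> : (1 / 5 : R) = 5^-1 by field.
set z := (5^-1 : R) ^+ l.
rewrite (mulrC (P ^+ l) z) !mulrA (mulrC 4 z) -!mulrA.
move=> z0; rewrite -[X in _ <= X]mulr1; apply: ler_wpM2l => //.
by rewrite mulrA.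
Qed.
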